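(* Let $G$ be an $n$-isobicyclic group with canonical generators $x,y$, and let $P$ be an abelian normal Sylow $p$-subgroup of $G$, so $P=\langle x_p\rangle\times\langle y_p\rangle\cong C_{p^d}\times C_{p^d}$. Then $G$ acts diagonally on $P$ with respect to the basis $x_p,y_p$: there exists $\lambda\in\mathbb Z_{p^d}^*$ such that conjugation by $x$ fixes $x_p$ and sends $y_p\mapsto y_p^\lambda$, and conjugation by $y$ sends $x_p\mapsto x_p^\lambda$ and fixes $y_p$.
   Context: $G$ is $n$-isobicyclic with canonical generators $x,y$ if $X=\langle x\rangle$, $Y=\langle y\rangle$ are cyclic of order $n$, $G=XY$, $X\cap Y=1$, and some automorphism of $G$ transposes $x,y$. For a prime $p$, $x=x_px_{p'}$ and $y=y_py_{p'}$ are the factorisations into commuting elements of $p$-power and $p'$-order; $\langle x_p\rangle\langle y_p\rangle$ is a Sylow $p$-subgroup of $G$, equal to $P$ when $P$ is normal. *)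

(* Defs.v *)
From mathcomp Require Import all_boot all_fingroup all_solvable.
Set Implicit Arguments. Unset Strict Implicit. Unset Printing Implicit Defensive.
Local Open Scope group_scope.

Definition isobicyclic (gT : finGroupType) (G : {group gT}) (x y : gT) (n : nat) : Prop :=
  [/\ #[x]%g = n, #[y]%g = n, (<[x]> * <[y]>)%g = G, (<[x]> :&: <[y]> = 1)%g
    & exists2 a : {perm gT}, a \in Aut G & a x = y /\ a y = x].

(* Main.v *)
Require Import Defs.
From mathcomp Require Import all_boot all_fingroup all_solvable.
Set Implicit Arguments. Unset Strict Implicit. Unset Printing Implicit Defensive.
Local Open Scope group_scope.

Lemma key (gT : finGroupType) (P : {group gT}) (p : nat) (xp yp h : gT) :
  prime p -> p.-group P -> abelian P -> xp \in P -> yp \in P ->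
  <[xp]> * <[yp]> = P -> <[xp]> :&: <[yp]> = 1 ->
  h \in 'N(P) -> p^'.-elt h -> h \in 'C[xp] -> h \notin 'C(P) ->
  'C_P[h] \subset <[xp]>.
Proof.
move=> pr_p pP abP xpP ypP defP tiP nPh p'h cxh ncPh.
set A := <[h]>.
have nPA : A \subset 'N(P) by rewrite cycle_subG.
have coPA : coprime #|P| #|A| by apply: (pnat_coprime pP).
set C := 'C_P(A).
have defC : 'C_P[h] = C by rewrite /C cent_cycle.
rewrite defC.
have xpC : xp \in C by rewrite inE xpP cent_cycle cent1C.
have sXC : <[xp]> \subset C by rewrite cycle_subG.
set R := [~: P, A].
have sRP : R \subset P by rewrite commg_subl.
have ntR : R != 1.
  apply/eqP=> /commG1P cPA; case/negP: ncPh.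
  by rewrite -cycle_subG centsC.
have tiRC : 'C_R(A) = 1 by apply: coprime_abel_cent_TI.
have tiB : C :&: <[yp]> = 1.
  apply/eqP; apply/negPn/negP=> ntB.
  have pR : p.-group R := pgroupS sRP pP.
  have [_ pdvR _] := pgroup_pdiv pR ntR.
  have [u Ru ou] := Cauchy pr_p pdvR.
  have Pu : u \in P := subsetP sRP u Ru.
  have uO : u \in 'Ohm_1(P).
    rewrite (OhmE 1 pP); apply: mem_gen; rewrite !inE Pu /= expn1 -ou expg_order //.
  have sYpP : <[yp]> \subset P by rewrite cycle_subG.
  have ntYp : <[yp]> :!=: 1.
    apply: contraNneq ntB => Yp1; rewrite Yp1 setIg1 //.
  have oO : #|'Ohm_1(<[yp]>)| = p.
    apply: (Ohm1_cyclic_pgroup_prime (cycle_cyclic _)) => //.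
    exact: pgroupS sYpP pP.
  have sOB : 'Ohm_1(C :&: <[yp]>) \subset 'Ohm_1(<[yp]>) by apply: OhmS; apply: subsetIr.
  have eqO : 'Ohm_1(C :&: <[yp]>) = 'Ohm_1(<[yp]>).
    apply/eqP; rewrite eqEcard sOB oO.
    have ntO : #|'Ohm_1(C :&: <[yp]>)| != 1%N by rewrite -trivg_card1 Ohm1_eq1.
    have := cardSg sOB; rewrite oO => /(prime_nt_dvdP pr_p ntO) ->.
    by rewrite leqnn.
  have sOYC : 'Ohm_1(<[yp]>) \subset C.
    by rewrite -eqO; apply: subset_trans (Ohm_sub 1 _) (subsetIl _ _).
  have dP : <[xp]> \x <[yp]> = P.
    rewrite dprodE ?defP //.
    have sXP : <[xp]> \subset P by rewrite cycle_subG.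
    exact: subset_trans sYpP (subset_trans abP (centS sXP)).
  have sOC : 'Ohm_1(P) \subset C.
    rewrite -(dprodW (Ohm_dprod 1 dP)) mulG_subG sOYC andbT.
    exact: subset_trans (Ohm_sub 1 _) sXC.
  have : u \in 'C_R(A).
    rewrite inE Ru; have := subsetP sOC u uO; by rewrite inE => /andP[].
  rewrite tiRC inE => /eqP u1.
  by move: ou; rewrite u1 order1 => p1; rewrite -p1 in pr_p.
apply/subsetP=> z Cz.
have Pz : z \in P by move: Cz; rewrite inE => /andP[].
rewrite -defP in Pz; case/mulsgP: Pz => a b Xa Yb zab.
have Ca : a \in C := subsetP sXC a Xa.
have Cb : b \in C by rewrite -(mulKg a b) -zab groupM ?groupV.
have : b \in C :&: <[yp]> by rewrite inE Cb.
by rewrite tiB inE zab => /eqP ->; rewrite mulg1.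
Qed.

Lemma side (gT : finGroupType) (G P : {group gT}) (x y : gT) (p : nat) :
  prime p -> p.-Sylow(G) P -> P <| G -> abelian P ->
  <[x]> * <[y]> = G -> <[x]> :&: <[y]> = 1 -> #[x] = #[y] ->
  #|<[y]> : <[y]> :&: 'C(P)| <= #|<[x]> : <[x]> :&: 'C(P)| ->
  x.`_p ^ y \in <[x.`_p]>.
Proof.
move=> pr_p sylP nPG abP defG tiXY oxy le_m.
have sXG : <[x]> \subset G by rewrite -defG mulG_subl.
have sYG : <[y]> \subset G by rewrite -defG mulG_subr.
have xG : x \in G by rewrite -cycle_subG.
have yG : y \in G by rewrite -cycle_subG.
have pP : p.-group P := pHall_pgroup sylP.
set xp := x.`_p; set yp := y.`_p.
have xpX : xp \in <[x]> := cycle_constt p x.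
have ypY : yp \in <[y]> := cycle_constt p y.
have xpP : xp \in P.
  by rewrite (mem_normal_Hall sylP nPG) ?(subsetP sXG) // p_elt_constt.
have ypP : yp \in P.
  by rewrite (mem_normal_Hall sylP nPG) ?(subsetP sYG) // p_elt_constt.
have tiP : <[xp]> :&: <[yp]> = 1.
  apply/trivgP; rewrite -tiXY; apply: setISS; by rewrite cycle_subG.
have defP : <[xp]> * <[yp]> = P.
  apply/eqP; rewrite eqEcard mulG_subG !cycle_subG xpP ypP /=.
  rewrite TI_cardMg // (card_Hall sylP) -defG TI_cardMg //.
  rewrite partnM ?order_gt0 // -!order_constt.
  by [].
have abX : abelian <[x]> := cycle_abelian x.
have cX u v : u \in <[x]> -> v \in <[x]> -> u ^ v = u.
  move=> Xu Xv; by rewrite /conjg (centsP abX u Xu v Xv) mulKg.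
set z := xp ^ y.
have Pz : z \in P by rewrite memJ_norm // (subsetP (normal_norm nPG)).
have [-> | nzx] := eqVneq z xp; first exact: cycle_id.
have [g /setIP[Xg cgz] ncg] : exists2 g, g \in 'C_(<[x]>)[z] & g \notin 'C(P).
  apply/subsetPn/negP => sCC.
  have eqC : 'C_(<[x]>)[z] = <[x]> :&: 'C(P).
    apply/eqP; rewrite eqEsubset subsetI subsetIl sCC /=.
    apply/subsetP=> g /setIP[Xg cPg]; rewrite inE Xg /=.
    apply/cent1P; exact: (centP cPg).
  set S := xp ^: <[y]>.
  have sZS : z ^: <[x]> \proper S.
    rewrite properE; apply/andP; split.
      apply/subsetP=> w /imsetP[v Xv ->]; rewrite /z -conjgM.
      have : y * v \in <[x]> * <[y]> by rewrite defG groupM // (subsetP sXG).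
      case/mulsgP=> a b Xa Yb ->; rewrite conjgM (cX xp a) //.
      exact: memJ_class Yb.
    apply/subsetPn; exists xp; first exact: class_refl.
    apply/negP=> /imsetP[v Xv zv]; case/negP: nzx; apply/eqP.
    by rewrite -[z](conjgK v) -zv cX // groupV.
  have := proper_card sZS; rewrite -!index_cent1 eqC => lt1.
  have le2 : #|<[y]> : 'C_(<[y]>)[xp]| <= #|<[y]> : <[y]> :&: 'C(P)|.
    apply: dvdn_leq; first exact: indexg_gt0.
    apply: indexgS; apply/subsetP=> g /setIP[Yg cPg]; rewrite inE Yg /=.
    apply/cent1P; exact: (centP cPg xp xpP).
  by have := leq_trans lt1 (leq_trans le2 le_m); rewrite ltnn.
set h := g.`_p^'.
have Xh : h \in <[x]> by apply: subsetP (cycle_constt _ g); rewrite cycle_subG.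
have gpP : g.`_p \in P.
  rewrite (mem_normal_Hall sylP nPG) ?p_elt_constt //.
  apply: (subsetP sXG); apply: subsetP (cycle_constt _ g); by rewrite cycle_subG.
have cPP : P \subset 'C(P) := abP.
have eqg : g = g.`_p * h by rewrite consttC.
have sCX : 'C_P[h] \subset <[xp]>.
  apply: (key pr_p pP abP xpP ypP defP tiP).
  - by rewrite (subsetP (normal_norm nPG)) // (subsetP sXG).
  - exact: p_elt_constt.
  - by apply/cent1P; rewrite /commute /conjg; apply: (centsP abX).
  apply: contra ncg => cPh; rewrite eqg groupM //.
  exact: subsetP cPP _ gpP.
apply: (subsetP sCX); rewrite inE Pz /=; apply/cent1P.
have cgz' : z ^ g = z by apply/conjg_fixP; apply/commgP; apply/cent1P; rewrite cent1C.
have zh : z ^ h = z.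
  rewrite -{2}cgz' eqg conjgM.
  by rewrite /conjg (centsP abP z Pz _ gpP) mulKg.
apply/commgP; apply/conjg_fixP; exact: zh.
Qed.

Lemma getlam (gT : finGroupType) (u v : gT) (p : nat) :
  prime p -> p.-elt u -> u ^ v \in <[u]> -> exists2 k, coprime k p & u ^ v = u ^+ k.
Proof.
move=> pr_p pu uv.
have [-> | ntu] := eqVneq u 1.
  by exists 1%N; rewrite ?coprime1n // conj1g expg1n.
case/cycleP: uv => i ei; exists i => //.
have gen : generator <[u]> (u ^+ i).
  rewrite /generator eq_sym eqEcard cycleX /=.
  have h := orderJ u v; rewrite ei in h.
  by rewrite -[X in _ <= X]/#[u ^+ i] h.
rewrite generator_coprime in gen.
have ntU : <[u]> != 1 by rewrite cycle_eq1.
have [_ pdv _] := pgroup_pdiv pu ntU.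
by rewrite coprime_sym (coprime_dvdl pdv gen).
Qed.

Lemma transfer (gT : finGroupType) (G : {group gT}) (a : {perm gT}) (x y : gT) (p k : nat) :
  a \in Aut G -> x \in G -> y \in G -> a x = y -> a y = x ->
  x.`_p ^ y = x.`_p ^+ k -> y.`_p ^ x = y.`_p ^+ k.
Proof.
move=> Aa xG yG ax ay e.
have fE : forall w, autm Aa w = a w by move=> w; rewrite autmE.
have xpG : x.`_p \in G by rewrite groupX.
have -> : y.`_p = autm Aa x.`_p.
  rewrite (morph_constt (autm Aa)) //; congr constt; by rewrite -[y]ax -fE.
transitivity (autm Aa (x.`_p ^ y)); first by rewrite morphJ //; congr (_ ^ _); rewrite -[LHS]ay -fE.
by rewrite e morphX.
Qed.

Theorem proposition7p2 (gT : finGroupType) (G P : {group gT}) (x y : gT) (n p : nat) :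
  isobicyclic G x y n -> prime p ->
  (P \in 'Syl_p(G))%g -> (P <| G)%g -> abelian P ->
  exists2 lam : nat, coprime lam p &
    [/\ (x.`_p ^ x = x.`_p)%g, (y.`_p ^ x = y.`_p ^+ lam)%g,
        (x.`_p ^ y = x.`_p ^+ lam)%g & (y.`_p ^ y = y.`_p)%g].
Proof.
case=> ox oy defG tiXY [a Aa [ax ay]] pr_p sylP nPG abP.
rewrite inE in sylP.
have xG : x \in G by rewrite -cycle_subG -defG mulG_subl.
have yG : y \in G by rewrite -cycle_subG -defG mulG_subr.
have oxy : #[x] = #[y] by rewrite ox oy.
have defG' : <[y]> * <[x]> = G.
  have : commute <[x]> <[y]> by apply/comm_group_setP; rewrite defG groupP.
  by move=> c; rewrite -c.
have fix1 (u : gT) : u.`_p ^ u = u.`_p.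
  by rewrite /conjg (centsP (cycle_abelian u) _ (cycle_constt p u) u (cycle_id u)) mulKg.
have [lam clam [e1 e2]] : exists2 lam, coprime lam p &
    x.`_p ^ y = x.`_p ^+ lam /\ y.`_p ^ x = y.`_p ^+ lam.
  case: (leqP #|<[y]> : <[y]> :&: 'C(P)| #|<[x]> : <[x]> :&: 'C(P)|) => le.
    have := side pr_p sylP nPG abP defG tiXY oxy le.
    case/(getlam pr_p (p_elt_constt p x)) => k ck ek.
    exists k => //; split => //; exact: transfer Aa xG yG ax ay ek.
  have tiYX : <[y]> :&: <[x]> = 1 by rewrite setIC.
  have := side pr_p sylP nPG abP defG' tiYX (esym oxy) (ltnW le).
  case/(getlam pr_p (p_elt_constt p y)) => k ck ek.
  exists k => //; split => //; exact: transfer Aa yG xG ay ax ek.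
by exists lam => //; split.
Qed.
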